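(* Let $k=k(N)=o(N)$ and consider the $S_k$ shuffle with boundary rates $\delta_j\in[0,1]$, $2\le j\le k-1$. There exists an absolute constant $C>0$ such that for all $N$ sufficiently large and all $x\in[k,2k]$, $E_x[\tilde\tau_{>4k}]\le C/\sqrt k$.
   Context: The $S_k$ shuffle with boundary rates $(\delta_j)$: on $N$ cards, each block of $k$ consecutive positions is uniformly reshuffled at rate 1, and for each $2\le j\le k-1$ the first $j$ cards and the last $j$ cards are each uniformly reshuffled at rate $\delta_j$. Let $Z_{1,t}$ be the position at time $t$ of the card with label 1; $(Z_{1,t})_{t\ge0}$ is itself a Markov chain on $[N]$, and $P_x$ (with expectation $E_x$) denotes its law when $Z_{1,0}=x$. For $y\in[N]$, $\tilde\tau_{>y}=\inf\{t\ge0:Z_{1,t}>y\}$ and $\tilde\tau_{<y}=\inf\{t\ge0:Z_{1,t}<y\}$. *)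

(* Defs.v *)
From HB Require Import structures.
From mathcomp Require Import all_boot all_order all_algebra.
From mathcomp Require Import all_classical all_reals all_analysis.
Set Implicit Arguments. Unset Strict Implicit. Unset Printing Implicit Defensive.
Import Order.TTheory GRing.Theory Num.Theory.
Local Open Scope ring_scope.

(* A "block" is a triple (lo, hi, rate): the positions lo..hi are uniformly
   reshuffled at rate [rate] (by an independent Poisson clock).
   - interior blocks: (i, i+k-1, 1) for 1 <= i <= N-k+1;
   - boundary blocks: (1, j, delta j) and (N-j+1, N, delta j) for 2 <= j <= k-1. *)
Section Sk.
Variable R : realType.

Definition Sk_blocks (N k : nat) (delta : nat -> R) : seq (nat * nat * R) :=
  [seq (i, (i + k - 1)%N, 1) | i <- iota 1 (N - k + 1)]
  ++ [seq (1%N, j, delta j) | j <- iota 2 (k - 2)]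
  ++ [seq ((N - j + 1)%N, N, delta j) | j <- iota 2 (k - 2)].

Definition Sk_total_rate (N k : nat) (delta : nat -> R) : R :=
  \sum_(b <- Sk_blocks N k delta) b.2.

Definition in_block (b : nat * nat * R) (x : nat) : bool :=
  (b.1.1 <= x <= b.1.2)%N.

(* Transition kernel of Z_1 observed at the successive reshuffling events
   (graphical/Poisson-clock construction): at each event a block b is chosen
   with probability rate(b)/Lambda; if card 1 is in b its new position is
   uniform in b, otherwise it stays put. *)
Definition Sk_kernel (N k : nat) (delta : nat -> R) (x z : nat) : R :=
  \sum_(b <- Sk_blocks N k delta)
    (b.2 / Sk_total_rate N k delta) *
    (if in_block b x then
       (if in_block b z then ((b.1.2 - b.1.1).+1)%:R^-1 else 0)
     else (if z == x then 1 else 0)).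

(* surv n x = P_x(Z_1 stays <= y during the first n events), for x in [N] *)
Fixpoint Sk_surv (N k : nat) (delta : nat -> R) (y : nat) (n : nat) (x : nat) : R :=
  match n with
  | 0 => if (x <= y)%N then 1 else 0
  | n'.+1 => if (x <= y)%N then
               \sum_(1 <= z < N.+1) Sk_kernel N k delta x z * Sk_surv N k delta y n' z
             else 0
  end.

(* E_x[tilde tau_{>y}] for the continuous-time chain Z_1: the number T of
   reshuffling events up to the hitting time satisfies E_x[T] = sum_n P_x(T > n),
   and the events form a Poisson process of rate Lambda independent of the
   jumps, so E_x[tilde tau_{>y}] = E_x[T] / Lambda (possibly +oo). *)
Definition Sk_exp_hit_gt (N k : nat) (delta : nat -> R) (y x : nat) : \bar R :=
  (\sum_(0 <= n <oo) (Sk_surv N k delta y n x / Sk_total_rate N k delta)%:E)%E.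

End Sk.

(* Main.v *)
Require Import Defs.
From HB Require Import structures.
From mathcomp Require Import all_boot all_order all_algebra.
From mathcomp Require Import all_classical all_reals all_analysis.
From mathcomp Require Import ring lra zify.
Import Order.TTheory GRing.Theory Num.Theory numFieldNormedType.Exports.
Local Open Scope classical_set_scope.
Local Open Scope ring_scope.
From Stdlib Require PeanoNat.
Lemma sum_window (R : realType) (F : nat -> R) m n lo hi :
  (m <= lo)%N -> (lo <= hi)%N -> (hi < n)%N ->
  \sum_(m <= u < n) (if (lo <= u <= hi)%N then F u else 0) = \sum_(lo <= u < hi.+1) F u.
Proof.
move=> h1 h2 h3.
rewrite (big_cat_nat _ (n:=lo)) //=; last by lia.
rewrite (big_cat_nat _ (n:=hi.+1) (m:=lo)) //=; try lia.
rewrite big1_seq; last first.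
  move=> u /andP[_]; rewrite mem_index_iota => /andP[_ hu].
  by case: ifP => // /andP[? ?]; lia.
rewrite [X in _ + (_ + X)]big1_seq; last first.
  move=> u /andP[_]; rewrite mem_index_iota => /andP[hu _].
  by case: ifP => // /andP[? ?]; lia.
rewrite add0r addr0; apply: eq_big_nat => u /andP[? ?].
by rewrite ifT //; apply/andP; split; lia.
Qed.

Lemma sum_pt (R : realType) (F : nat -> R) m n z :
  (m <= z < n)%N -> \sum_(m <= u < n) (if u == z then F u else 0) = F z.
Proof.
move=> /andP[h1 h2].
rewrite (eq_bigr (fun u => if (z <= u <= z)%N then F u else 0)).
  by rewrite sum_window // big_nat1.
by move=> u _; rewrite eqn_leq andbC.
Qed.
Lemma sumsq (R : realType) p n : 6 * \sum_(p <= u < p + n) (u%:R : R)^+2 =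
  6 * n%:R * p%:R^+2 + 6 * p%:R * n%:R * (n%:R - 1) + n%:R * (n%:R - 1) * (2 * n%:R - 1).
Proof.
elim: n => [|n IH]; first by rewrite addn0 big_geq // mulr0; ring.
rewrite addnS big_nat_recr /=; last by lia.
rewrite mulrDr IH -[n.+1]addn1 !natrD; ring.
Qed.
Lemma sumlin (R : realType) p n : 2 * \sum_(p <= u < p + n) (u%:R : R) =
  2 * n%:R * p%:R + n%:R * (n%:R - 1).
Proof.
elim: n => [|n IH]; first by rewrite addn0 big_geq // mulr0; ring.
rewrite addnS big_nat_recr /=; last by lia.
rewrite mulrDr IH -[n.+1]addn1 !natrD; ring.
Qed.

Section Main.
Variable R : realType.
Variables (N k : nat) (d : nat -> R).
Hypothesis k2 : (2 <= k)%N.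
Hypothesis Nk : (5 * k < N)%N.
Hypothesis d01 : forall j, (2 <= j <= k - 1)%N -> 0 <= d j <= 1.

Local Notation blocks := (Sk_blocks N k d).
Local Notation Lam := (Sk_total_rate N k d).
Local Notation K := (Sk_kernel N k d).

Lemma blocks_ok b : b \in blocks ->
  [/\ (1 <= b.1.1)%N, (b.1.1 <= b.1.2)%N, (b.1.2 <= N)%N & 0 <= b.2].
Proof.
rewrite /Sk_blocks !mem_cat => /or3P[] /mapP[i]; rewrite mem_iota => hi -> /=.
- by split => //; lia.
- split => //; try lia; by case/andP: (d01 i ltac:(lia)).
- split => //; try lia; by case/andP: (d01 i ltac:(lia)).
Qed.

Lemma Lam_gt0 : 0 < Lam.
Proof.
rewrite /Sk_total_rate /Sk_blocks !big_cat /= !big_map.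
have -> : iota 1 (N - k + 1) = index_iota 1 (N - k + 2) by rewrite /index_iota; congr iota; lia.
rewrite sumr_const_nat.
have h0 : 0 <= \sum_(j <- iota 2 (k - 2)) (1%N, j, d j).2.
  rewrite big_seq; apply: sumr_ge0 => j; rewrite mem_iota => hj /=.
  by case/andP: (d01 j ltac:(lia)).
have h1 : 0 <= \sum_(j <- iota 2 (k - 2)) ((N - j + 1)%N, N, d j).2.
  rewrite big_seq; apply: sumr_ge0 => j; rewrite mem_iota => hj /=.
  by case/andP: (d01 j ltac:(lia)).
have h2 : 0 < (1 : R) *+ (N - k + 2 - 1) by rewrite pmulrn_rgt0 //; lia.
lra.
Qed.

Lemma K_ge0 x z : 0 <= K x z.
Proof.
rewrite /Sk_kernel big_seq; apply: sumr_ge0 => b hb.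
case: (blocks_ok b hb) => _ _ _ h2.
apply: mulr_ge0; first by apply: divr_ge0 => //; apply: ltW; apply: Lam_gt0.
by case: ifP => _; case: ifP => _ //; rewrite invr_ge0 ler0n.
Qed.

Lemma K_sym x z : K x z = K z x.
Proof.
rewrite /Sk_kernel; apply: eq_bigr => b _; congr (_ * _).
case: (eqVneq x z) => [->//|hxz].
have e1 : (z == x) = false by rewrite eq_sym; apply/negbTE.
have e2 : (x == z) = false by apply/negbTE.
rewrite ?e1 ?e2.
case hx: (in_block b x); case hz: (in_block b z) => //=; rewrite ?e1 ?e2 //.
Qed.

Definition avg (h : nat -> R) (lo hi : nat) : R :=
  (\sum_(lo <= u < hi.+1) h u) / ((hi - lo).+1)%:R.

Definition Gen (h : nat -> R) (z : nat) : R :=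
  \sum_(b <- blocks) b.2 * (if in_block b z then avg h b.1.1 b.1.2 - h z else 0).

Lemma K_expand h z : (1 <= z <= N)%N ->
  \sum_(1 <= u < N.+1) K z u * h u = h z + Gen h z / Lam.
Proof.
move=> hzN.
have hL : Lam != 0 by rewrite gt_eqF // Lam_gt0.
rewrite /Sk_kernel.
under eq_bigr do rewrite big_distrl /=.
rewrite exchange_big /=.
have hz : h z = \sum_(b <- blocks) b.2 / Lam * h z.
  by rewrite -big_distrl -big_distrl /= divff // mul1r.
rewrite {1}hz /Gen big_distrl -big_split /=.
apply: eq_big_seq => b hb.
case: (blocks_ok b hb) => h1 h2 h3 _.
case hin: (in_block b z).
- set s := ((b.1.2 - b.1.1).+1)%:R^-1.
  transitivity (\sum_(1 <= u < N.+1) b.2 / Lam * s * (if (b.1.1 <= u <= b.1.2)%N then h u else 0)).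
    by apply: eq_bigr => u _; rewrite /in_block; case: ifP => _; rewrite ?mulr0 ?mul0r ?mulr1.
  rewrite -big_distrr /= sum_window //.
  rewrite /avg -/s; ring.
- transitivity (\sum_(1 <= u < N.+1) b.2 / Lam * (if u == z then h u else 0)).
    by apply: eq_bigr => u _; case: ifP => _; rewrite ?mulr0 ?mul0r ?mulr1.
  rewrite -big_distrr /= sum_pt //.
  by rewrite mulr0 mul0r addr0.
Qed.

Definition az z := maxn 1 (z + 1 - k).

Lemma Gen_split h z : (1 <= z <= 4 * k)%N -> Gen h z =
  \sum_(az z <= i < z.+1) (avg h i (i + k - 1) - h z)
  + \sum_(j <- iota 2 (k - 2)) (if (z <= j)%N then d j * (avg h 1 j - h z) else 0).
Proof.
move=> /andP[hz1 hz2].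
rewrite /Gen /Sk_blocks !big_cat /= !big_map.
rewrite [X in _ + (_ + X)]big1_seq ?addr0; last first.
  move=> j /andP[_]; rewrite mem_iota => hj; rewrite /in_block /= ifF ?mulr0 //.
  by apply/negbTE/negP => /andP[? _]; lia.
congr (_ + _).
  have -> : iota 1 (N - k + 1) = index_iota 1 (N - k + 2) by rewrite /index_iota; congr iota; lia.
  rewrite (eq_big_nat _ _ (F2 := fun i => if (az z <= i <= z)%N then avg h i (i + k - 1) - h z else 0)).
    rewrite sum_window //; rewrite /az; lia.
  move=> i /andP[hi1 hi2]; rewrite mul1r /in_block /=.
  have -> : (i <= z <= i + k - 1)%N = (az z <= i <= z)%N.
    by rewrite /az; apply/idP/idP => /andP[? ?]; apply/andP; split; lia.
  by [].
apply: eq_bigr => j _; rewrite /in_block /= hz1 /=.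
by case: ifP => _; rewrite ?mulr0.
Qed.

Lemma avg_lin a b f1 f2 lo hi :
  avg (fun w => a * f1 w + b * f2 w) lo hi = a * avg f1 lo hi + b * avg f2 lo hi.
Proof. by rewrite /avg big_split /= -!big_distrr /=; ring. Qed.

Lemma Gen_lin a b f1 f2 z :
  Gen (fun w => a * f1 w + b * f2 w) z = a * Gen f1 z + b * Gen f2 z.
Proof.
rewrite /Gen !big_distrr -big_split /=; apply: eq_bigr => bl _.
by rewrite avg_lin; case: ifP => _; ring.
Qed.

Definition g (w : nat) : R := if (w <= 5 * k)%N then (5 * k)%:R ^+ 2 - w%:R ^+ 2 else 0.
Definition sq lo hi := avg (fun u => u%:R ^+ 2) lo hi.

Lemma avg_g lo hi : (lo <= hi <= 5 * k)%N -> avg g lo hi = (5 * k)%:R ^+ 2 - sq lo hi.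
Proof.
move=> /andP[h1 h2]; rewrite /sq /avg.
rewrite (eq_big_nat _ _ (F2 := fun u => (5 * k)%:R ^+ 2 - u%:R ^+ 2)); last first.
  by move=> u /andP[_ hu]; rewrite /g ifT //; lia.
rewrite big_split /= sumrN sumr_const_nat subSn // mulrBl; congr (_ - _).
by rewrite -[X in X / _]mulr_natr mulfK // pnatr_eq0.
Qed.

Lemma sq_int i : (1 <= i)%N ->
  sq i (i + k - 1) = i%:R ^+ 2 + i%:R * (k%:R - 1) + (k%:R - 1) * (2 * k%:R - 1) / 6.
Proof.
move=> hi; rewrite /sq /avg.
have -> : (i + k - 1).+1 = i + k by lia.
have -> : (i + k - 1 - i).+1 = k by lia.
have hS := sumsq R i k.
have hk : (k%:R : R) != 0 by rewrite pnatr_eq0; lia.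
set S := \sum_(i <= u < i + k) _ in hS *.
have -> : S = (6 * k%:R * i%:R ^+ 2 + 6 * i%:R * k%:R * (k%:R - 1) + k%:R * (k%:R - 1) * (2 * k%:R - 1)) / 6.
  by rewrite -hS; field.
by field.
Qed.

Lemma sq_ge0 lo hi : 0 <= sq lo hi.
Proof.
rewrite /sq /avg divr_ge0 //; apply: sumr_ge0 => u _; exact: sqr_ge0.
Qed.

Lemma sum_affine (al be : R) p n :
  \sum_(p <= i < p + n) (al - be * i%:R) = n%:R * al - be * (n%:R * p%:R + n%:R * (n%:R - 1) / 2).
Proof.
rewrite big_split /= sumrN sumr_const_nat addKn -big_distrr /=.
have hS := sumlin R p n.
set S := \sum_(p <= u < p + n) _ in hS *.
have -> : S = (2 * n%:R * p%:R + n%:R * (n%:R - 1)) / 2 by rewrite -hS; field.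
by rewrite -mulr_natr; field.
Qed.

Lemma count_bound (c : R) z : 0 <= c -> (1 <= z)%N ->
  \sum_(j <- iota 2 (k - 2)) (if (z <= j)%N then c else 0) <= c * (k - z)%:R.
Proof.
move=> hc hz.
have -> : iota 2 (k - 2) = index_iota 2 k by [].
case: (ltnP z k) => hzk.
- have H1 : \sum_(2 <= j < k) (if (z <= j)%N then c else 0) <= \sum_(1 <= j < k) (if (z <= j)%N then c else 0).
    rewrite [X in _ <= X](big_ltn (m:=1)); last by lia.
    have : 0 <= (if (z <= 1)%N then c else 0) by case: ifP.
    lra.
  apply: (le_trans H1).
  rewrite (eq_big_nat _ _ (F2 := fun j => if (z <= j <= k - 1)%N then c else 0)); last first.
    move=> j /andP[_ hj]; congr (if _ then _ else _).
    by apply/idP/idP => [h|/andP[//]]; apply/andP; split => //; lia.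
  rewrite sum_window; [|lia|lia|lia].
  rewrite sumr_const_nat (_ : ((k - 1).+1 - z = k - z)%N); last by lia.
  by rewrite mulr_natr.
- have -> : (k - z = 0)%N by lia.
  rewrite mulr0 big1_seq //.
  move=> j /andP[_]; rewrite mem_index_iota => hj; rewrite ifF //.
  by apply/negbTE; rewrite -ltnNge; lia.
Qed.

Lemma Gen_g z : (1 <= z <= 4 * k)%N ->
  Gen g z <= - (minn z k)%:R * (k%:R ^+ 2 - 1) / 12.
Proof.
move=> hz; rewrite Gen_split //.
case/andP: (hz) => hz1 hz2.
have hgz : g z = (5 * k)%:R ^+ 2 - z%:R ^+ 2 by rewrite /g ifT //; lia.
have hB : \sum_(j <- iota 2 (k - 2)) (if (z <= j)%N then d j * (avg g 1 j - g z) else 0)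
    <= z%:R ^+ 2 * (k - z)%:R.
  apply: (le_trans _ (count_bound (z%:R ^+ 2) z (sqr_ge0 _) hz1)).
  rewrite big_seq [X in _ <= X]big_seq; apply: ler_sum => j; rewrite mem_iota => hj.
  case: ifP => hzj //.
  rewrite avg_g; last by apply/andP; split; lia.
  rewrite hgz; case/andP: (d01 j ltac:(lia)) => d0 d1.
  have := sq_ge0 1 j.
  nra.
have hI : \sum_(az z <= i < z.+1) (avg g i (i + k - 1) - g z) <=
    \sum_(az z <= i < z.+1) ((2 * z%:R ^+ 2 - z%:R * (k%:R - 1) - (k%:R ^+ 2 - 1) / 12)
                              - 2 * z%:R * i%:R).
  apply: ler_sum_nat => i /andP[hi1 hi2].
  have ha : (1 <= i)%N by move: hi1; rewrite /az; lia.
  rewrite avg_g; last by apply/andP; split; lia.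
  rewrite sq_int // hgz -subr_ge0.
  set zz := z%:R; set ii := i%:R; set kk := k%:R.
  have := sqr_ge0 (ii + (kk - 1) / 2 - zz); nra.
case: (ltnP z k) => hzk.
- have ha : az z = 1 by rewrite /az; lia.
  have h1z : z.+1 = (1 + z)%N by lia.
  rewrite ha h1z sum_affine in hI.
  rewrite ha h1z.
  have hkz : (k - z)%:R = k%:R - z%:R :> R by rewrite natrB //; lia.
  rewrite hkz in hB.
  apply: (le_trans (lerD hI hB)).
  lra.
- have ha : az z = (z + 1 - k)%N by rewrite /az; lia.
  have h1z : z.+1 = ((z + 1 - k) + k)%N by lia.
  rewrite ha h1z sum_affine in hI.
  rewrite ha h1z.
  have hkz : (k - z)%N = 0%N by lia.
  rewrite hkz mulr0 in hB.
  have hzr : (z + 1 - k)%:R = z%:R + 1 - k%:R :> R by rewrite natrB ?natrD //; lia.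
  rewrite hzr in hI.
  apply: (le_trans (lerD hI hB)).
  lra.
Qed.

Definition ee (x w : nat) : R := if w == x then 1 else 0.

Lemma sum_ind_le1 m n x : \sum_(m <= u < n) ee x u <= 1.
Proof.
case: (boolP (m <= x < n)%N) => hx; first by rewrite /ee sum_pt.
rewrite big1_seq ?ler01 // => u /andP[_]; rewrite mem_index_iota => hu.
rewrite /ee ifF //; apply/negbTE; apply/eqP => e; subst u.
by rewrite hu in hx.
Qed.

Lemma Gen_e x z : (k <= x <= 2 * k)%N -> (1 <= z <= 4 * k)%N ->
  Gen (ee x) z <= (minn z k)%:R * (k%:R^-1 - ee x z).
Proof.
move=> hx hz; rewrite Gen_split //.
have hez : 0 <= ee x z by rewrite /ee; case: ifP.
have hB : \sum_(j <- iota 2 (k - 2)) (if (z <= j)%N then d j * (avg (ee x) 1 j - ee x z) else 0) <= 0.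
  rewrite big_seq; apply: sumr_le0 => j; rewrite mem_iota => hj.
  case: ifP => hzj //.
  have -> : avg (ee x) 1 j = 0.
    rewrite /avg big1_seq ?mul0r // => u /andP[_]; rewrite mem_index_iota => hu.
    rewrite /ee ifF //; apply/negbTE; apply/eqP => e; subst u; lia.
  case/andP: (d01 j ltac:(lia)) => d0 d1.
  nra.
have hI : \sum_(az z <= i < z.+1) (avg (ee x) i (i + k - 1) - ee x z) <=
          \sum_(az z <= i < z.+1) (k%:R^-1 - ee x z).
  apply: ler_sum_nat => i /andP[hi1 hi2].
  rewrite lerB //.
  rewrite /avg (_ : (i + k - 1 - i).+1 = k); last by lia.
  rewrite -[X in _ <= X]mul1r; apply: ler_wpM2r; first by rewrite invr_ge0 ler0n.
  exact: sum_ind_le1.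
rewrite sumr_const_nat in hI.
have hm : (z.+1 - az z)%N = minn z k by rewrite /az; lia.
rewrite hm in hI.
rewrite mulr_natl; have := lerD hI hB; rewrite addr0 => H; exact: H.
Qed.

Definition inr (u : nat) : bool := (1 <= u <= 4 * k)%N.
Definition Q x u : R := if inr x && inr u then K x u else 0.
Fixpoint P (n : nat) (x z : nat) : R :=
  match n with
  | 0 => if (x == z) && inr x then 1 else 0
  | n'.+1 => \sum_(1 <= u < (4 * k).+1) Q x u * P n' u z
  end.

Lemma Q_ge0 x u : 0 <= Q x u.
Proof. by rewrite /Q; case: ifP => _ //; apply: K_ge0. Qed.

Lemma Q_sym x u : Q x u = Q u x.
Proof. by rewrite /Q andbC K_sym. Qed.

Lemma Q_out x u : ~~ inr u -> Q x u = 0.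
Proof. by move=> h; rewrite /Q (negbTE h) andbF. Qed.

Lemma P_ge0 n x z : 0 <= P n x z.
Proof.
elim: n x z => [|n IH] x z /=; first by case: ifP.
by apply: sumr_ge0 => u _; apply: mulr_ge0; [apply: Q_ge0 | apply: IH].
Qed.

Lemma sum_P0r (F : nat -> R) z :
  \sum_(1 <= u < (4 * k).+1) F u * (if (u == z) && inr u then 1 else 0) = if inr z then F z else 0.
Proof.
case hz: (inr z).
- rewrite -(@sum_pt R F 1 (4 * k).+1 z); last by move: hz; rewrite /inr; lia.
  apply: eq_big_nat => u /andP[h1 h2].
  case: eqP => [->|_]; rewrite ?hz ?mulr1 ?mulr0 //.
- rewrite big1_seq // => u /andP[_]; rewrite mem_index_iota => hu.
  case: eqP => [e|_]; last by rewrite mulr0.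
  by subst u; move: hz; rewrite /inr; lia.
Qed.

Lemma sum_P0l (F : nat -> R) x :
  \sum_(1 <= u < (4 * k).+1) (if (x == u) && inr x then 1 else 0) * F u = if inr x then F x else 0.
Proof.
rewrite -sum_P0r; apply: eq_big_nat => u /andP[h1 h2].
rewrite mulrC; case: eqP => [->|]; first by rewrite eqxx.
by case: eqP => // ->.
Qed.

Lemma P_right n x z : P n.+1 x z = \sum_(1 <= u < (4 * k).+1) P n x u * Q u z.
Proof.
elim: n x z => [|n IH] x z.
- rewrite /= sum_P0r sum_P0l.
  case hx: (inr x); case hz: (inr z) => //.
  + by rewrite Q_out ?hz.
  + by rewrite Q_sym Q_out ?hx.
- have -> : P n.+2 x z = \sum_(1 <= u < (4 * k).+1) Q x u * P n.+1 u z by [].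
  under eq_bigr do rewrite IH big_distrr /=.
  rewrite exchange_big /=; apply: eq_bigr => w _.
  by rewrite big_distrl /=; apply: eq_bigr => u _; rewrite mulrA.
Qed.

Lemma P_sym n x z : P n x z = P n z x.
Proof.
elim: n x z => [|n IH] x z.
- by rewrite /=; case: (eqVneq x z) => [->//|h].
- rewrite P_right /=; apply: eq_bigr => u _.
  by rewrite Q_sym IH mulrC.
Qed.

Lemma surv_gt n z : (4 * k < z)%N -> Sk_surv N k d (4 * k) n z = 0.
Proof. by case: n => [|n] /= h; rewrite ifF //; apply/negbTE; rewrite -ltnNge. Qed.

Lemma surv_P n x : inr x -> Sk_surv N k d (4 * k) n x = \sum_(1 <= z < (4 * k).+1) P n x z.
Proof.
elim: n x => [|n IH] x hx.
- rewrite /= ifT; last by move: hx; rewrite /inr; lia.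
  rewrite -[LHS](@sum_pt R (fun _ => 1) 1 (4 * k).+1 x); last by move: hx; rewrite /inr; lia.
  apply: eq_big_nat => z _; rewrite hx andbT eq_sym.
  by case: eqP.
- rewrite [LHS]/= ifT; last by move: hx; rewrite /inr; lia.
  rewrite (big_cat_nat _ (n := (4 * k).+1)) //=; last by lia.
  rewrite [X in _ + X]big1_seq ?addr0; last first.
    by move=> z /andP[_]; rewrite mem_index_iota => hz; rewrite surv_gt ?mulr0 //; lia.
  transitivity (\sum_(1 <= z < (4 * k).+1) \sum_(1 <= w < (4 * k).+1) Q x z * P n z w).
    apply: eq_big_nat => z hz; rewrite IH; last by rewrite /inr.
    by rewrite big_distrr /= /Q hx (_ : inr z = true).
  by rewrite exchange_big.
Qed.

Lemma K_step (V f : nat -> R) z : (forall u, 0 <= V u) -> Gen V z <= - f z -> inr z ->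
  \sum_(1 <= u < (4 * k).+1) Q z u * (Lam * V u) <= Lam * V z - f z.
Proof.
move=> hV hG hz.
have hzN : (1 <= z <= N)%N by move: hz; rewrite /inr; lia.
have E := K_expand V z hzN.
have hL : 0 < Lam := Lam_gt0.
apply: (@le_trans _ _ (\sum_(1 <= u < N.+1) K z u * (Lam * V u))).
- rewrite (big_cat_nat _ (n := (4 * k).+1) (m:=1) (p:=N.+1)) //=; last by lia.
  rewrite -[X in X <= _]addr0; apply: lerD.
    apply: ler_sum_nat => u hu; rewrite /Q hz (_ : inr u = true) //.
  apply: sumr_ge0 => u _; apply: mulr_ge0; first exact: K_ge0.
  by apply: mulr_ge0; [apply: ltW | apply: hV].
- under eq_bigr do rewrite mulrCA.
  rewrite -big_distrr /= E mulrDr mulrCA divff ?mulr1; last by rewrite gt_eqF.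
  by rewrite lerD2l.
Qed.

Lemma lyap (V f : nat -> R) : (forall u, 0 <= V u) -> (forall z, inr z -> Gen V z <= - f z) ->
  forall n z, inr z ->
  \sum_(0 <= m < n) \sum_(1 <= u < (4 * k).+1) P m z u * f u <= Lam * V z.
Proof.
move=> hV hG n; elim: n => [|n IH] z hz.
  by rewrite big_geq // mulr_ge0 // ?hV // ltW // Lam_gt0.
rewrite big_nat_recl //.
have -> : \sum_(1 <= u < (4 * k).+1) P 0 z u * f u = f z by rewrite sum_P0l hz.
have -> : \sum_(0 <= m < n) \sum_(1 <= u < (4 * k).+1) P m.+1 z u * f u =
  \sum_(1 <= w < (4 * k).+1) Q z w * \sum_(0 <= m < n) \sum_(1 <= u < (4 * k).+1) P m w u * f u.
  transitivity (\sum_(1 <= w < (4 * k).+1) \sum_(0 <= m < n) \sum_(1 <= u < (4 * k).+1) Q z w * (P m w u * f u)); last first.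
    by apply: eq_bigr => w _; rewrite big_distrr /=; apply: eq_bigr => m _; rewrite big_distrr.
  symmetry.
  rewrite exchange_big /=; apply: eq_bigr => m _.
  rewrite exchange_big /=; apply: eq_bigr => u _.
  by rewrite /= big_distrl /=; apply: eq_bigr => w _; rewrite mulrA.
have step := K_step V f z hV (hG z hz) hz.
have H : \sum_(1 <= w < (4 * k).+1) Q z w * \sum_(0 <= m < n) \sum_(1 <= u < (4 * k).+1) P m w u * f u
    <= \sum_(1 <= w < (4 * k).+1) Q z w * (Lam * V w).
  apply: ler_sum_nat => w hw; apply: ler_wpM2l; first exact: Q_ge0.
  by apply: IH; rewrite /inr.
lra.
Qed.

Lemma g_ge0 w : 0 <= g w.
Proof.
rewrite /g; case: ifP => h //.
have h1 : (w%:R : R) <= (5 * k)%:R by rewrite ler_nat.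
have h0 : (0 : R) <= w%:R by [].
nra.
Qed.

Lemma g_le w : g w <= (5 * k)%:R ^+ 2.
Proof.
rewrite /g; case: ifP => h; last exact: sqr_ge0.
have := sqr_ge0 (w%:R : R); lra.
Qed.

Lemma ee_ge0 x w : 0 <= ee x w. Proof. by rewrite /ee; case: ifP. Qed.
Lemma ee_le1 x w : ee x w <= 1. Proof. by rewrite /ee; case: ifP. Qed.

Lemma main_bound x M : (k <= x <= 2 * k)%N -> (1 <= M <= k)%N -> forall n,
  \sum_(0 <= m < n) (Sk_surv N k d (4 * k) m x / Lam) <=
  (12 / (M%:R * (k%:R ^+ 2 - 1))) * (5 * k)%:R ^+ 2
  + M%:R * (12 / (k%:R ^+ 2 * (k%:R ^+ 2 - 1)) * (5 * k)%:R ^+ 2 + k%:R^-1).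
Proof.
move=> hx hM n.
set A := 12 / (M%:R * (k%:R ^+ 2 - 1)).
set B := 12 / (k%:R ^+ 2 * (k%:R ^+ 2 - 1)).
set D := (k%:R : R)^-1.
have hk : (2 : R) <= k%:R by rewrite ler_nat.
have hK : (0 : R) < k%:R ^+ 2 - 1 by nra.
have hMr : (1 : R) <= M%:R by rewrite ler1n; lia.
have hA : 0 <= A by rewrite /A divr_ge0 // mulr_ge0 //; lra.
have hB : 0 <= B by rewrite /B divr_ge0 // mulr_ge0 //; lra.
have hD : 0 <= D by rewrite /D invr_ge0.
have hL : 0 < Lam := Lam_gt0.
have hxr : inr x by rewrite /inr; lia.
have hV1 : forall u, 0 <= A * g u + 0 * ee x u.
  by move=> u; rewrite mul0r addr0 mulr_ge0 // g_ge0.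
have hG1 : forall z, inr z -> Gen (fun w => A * g w + 0 * ee x w) z <= - (if (M < z)%N then 1 else 0).
  move=> z hz; rewrite Gen_lin mul0r addr0.
  have Hg := ler_wpM2l hA (Gen_g z hz).
  apply: (le_trans Hg).
  have E : A * (- (minn z k)%:R * (k%:R ^+ 2 - 1) / 12) = - ((minn z k)%:R / M%:R).
    by rewrite /A; field; apply/andP; split; rewrite ?gt_eqF //; lra.
  rewrite E lerN2.
  case: ifP => hMz.
    rewrite ler_pdivlMr; last lra.
    by rewrite mul1r ler_nat; lia.
  by rewrite divr_ge0.
have hV2 : forall u, 0 <= B * g u + D * ee x u.
  by move=> u; rewrite addr_ge0 // mulr_ge0 // ?g_ge0 ?ee_ge0.
have hG2 : forall z, inr z -> Gen (fun w => B * g w + D * ee x w) z <= - ee x z.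
  move=> z hz; rewrite Gen_lin.
  have H1 := ler_wpM2l hB (Gen_g z hz).
  have H2 := ler_wpM2l hD (Gen_e x z hx hz).
  apply: (le_trans (lerD H1 H2)).
  have E : B * (- (minn z k)%:R * (k%:R ^+ 2 - 1) / 12) + D * ((minn z k)%:R * (k%:R^-1 - ee x z))
      = - ((minn z k)%:R / k%:R * ee x z).
    by rewrite /B /D; field; apply/andP; split; rewrite ?gt_eqF //; lra.
  rewrite E lerN2.
  rewrite /ee; case: eqP => [->|_]; last by rewrite mulr0.
  rewrite mulr1 (_ : minn x k = k); last by apply/minn_idPr; lia.
  by rewrite divff // gt_eqF //; lra.
have hsplit : forall m, Sk_surv N k d (4 * k) m x =
   \sum_(1 <= u < (4 * k).+1) P m x u * (if (M < u)%N then 1 else 0)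
 + \sum_(1 <= u < (4 * k).+1) (if (u <= M)%N then 1 else 0) * P m u x.
  move=> m; rewrite surv_P // -big_split /=; apply: eq_bigr => u _.
  rewrite (P_sym m u x); case: ifP => h1; case: ifP => h2; rewrite ?mulr1 ?mulr0 ?mul1r ?mul0r ?addr0 ?add0r //; lia.
have H1 := lyap (fun w => A * g w + 0 * ee x w) (fun u => if (M < u)%N then 1 else 0) hV1 hG1 n x hxr.
have H2 : forall u, inr u -> \sum_(0 <= m < n) P m u x <= Lam * (B * g u + D * ee x u).
  move=> u hu; apply: (le_trans _ (lyap (fun w => B * g w + D * ee x w) (ee x) hV2 hG2 n u hu)).
  rewrite le_eqVlt; apply/orP; left; apply/eqP.
  apply: eq_bigr => m _.
  rewrite /ee -(@sum_pt R (fun w => P m u w) 1 (4 * k).+1 x); last by move: hxr; rewrite /inr; lia.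
  by apply: eq_bigr => w _; case: eqP => _; rewrite ?mulr1 ?mulr0.
have H3 : \sum_(0 <= m < n) \sum_(1 <= u < (4 * k).+1) (if (u <= M)%N then 1 else 0) * P m u x
   <= M%:R * (Lam * (B * (5 * k)%:R ^+ 2 + D)).
  rewrite exchange_big /=.
  apply: (@le_trans _ _ (\sum_(1 <= u < (4 * k).+1) (if (u <= M)%N then 1 else 0) * (Lam * (B * (5 * k)%:R ^+ 2 + D)))).
    apply: ler_sum_nat => u hu.
    rewrite -big_distrr /=; apply: ler_wpM2l; first by case: ifP.
    apply: (le_trans (H2 u ltac:(rewrite /inr; lia))).
    apply: ler_wpM2l; first lra.
    apply: lerD; first by apply: ler_wpM2l => //; apply: g_le.
    by rewrite -[X in _ <= X]mulr1; apply: ler_wpM2l => //; apply: ee_le1.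
  rewrite -big_distrl /=.
  rewrite (eq_big_nat _ _ (F2 := fun u => if (1 <= u <= M)%N then 1 else 0)); last first.
    by move=> u /andP[h1 _]; rewrite h1.
  rewrite sum_window; [|lia|lia|lia].
  by rewrite sumr_const_nat subn1 /= mulr_natl.
rewrite -big_distrl /=.
under eq_bigr do rewrite hsplit.
rewrite big_split /=.
rewrite ler_pdivrMr //.
have hgx : g x <= (5 * k)%:R ^+ 2 := g_le x.
have HA : A * g x <= A * (5 * k)%:R ^+ 2 by apply: ler_wpM2l.
move: H1; rewrite mul0r addr0 => H1.
nra.
Qed.

Lemma surv_ge0 n x : inr x -> 0 <= Sk_surv N k d (4 * k) n x.
Proof. by move=> hx; rewrite surv_P //; apply: sumr_ge0 => z _; apply: P_ge0. Qed.

End Main.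
Lemma div_le (R : realType) (x y z w : R) : 0 < y -> 0 < w -> x * w <= z * y -> x / y <= z / w.
Proof. by move=> hy hw h; rewrite ler_pdivrMr // mulrAC ler_pdivlMr. Qed.

Lemma final_num (R : realType) (k M : nat) : (2 <= k)%N -> (1 <= M)%N -> (M * M <= k)%N -> (k < M.+1 * M.+1)%N ->
  12 / (M%:R * (k%:R ^+ 2 - 1)) * (5 * k)%:R ^+ 2
  + M%:R * (12 / (k%:R ^+ 2 * (k%:R ^+ 2 - 1)) * (5 * k)%:R ^+ 2 + k%:R^-1)
  <= 2000 / Num.sqrt (k%:R : R).
Proof.
move=> hk hM h1 h2.
have hKm : (k%:R : R) < (M%:R + 1) * (M%:R + 1).
  have : (k%:R : R) < (M.+1 * M.+1)%:R by rewrite ltr_nat.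
  by rewrite natrM -addn1 natrD.
have hmK : (M%:R : R) * M%:R <= k%:R by rewrite -natrM ler_nat.
rewrite natrM.
set K : R := k%:R; set m : R := M%:R; set s := Num.sqrt K.
have hK2 : 2 <= K by rewrite /K ler_nat.
have hm1 : 1 <= m by rewrite /m ler1n.
have hs0 : 0 < s by rewrite /s sqrtr_gt0; lra.
have hss : s ^+ 2 = K by rewrite /s sqr_sqrtr //; lra.
have hsm : m <= s by nra.
have hs2m : s <= 2 * m by nra.
have hK1 : 0 < K ^+ 2 - 1 by nra.
have T1 : 12 / (m * (K ^+ 2 - 1)) * (5%:R * K) ^+ 2 <= 800 / s.
  rewrite mulrAC; apply: div_le => //; first by apply: mulr_gt0; lra.
  have := ler_wpM2l (sqr_ge0 K) hs2m.
  nra.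
have E2 : m * (12 / (K ^+ 2 * (K ^+ 2 - 1)) * (5%:R * K) ^+ 2 + K^-1)
    = (m * (300 * K + K ^+ 2 - 1)) / ((K ^+ 2 - 1) * K).
  by field; apply/andP; split; rewrite gt_eqF //; lra.
have T2 : (m * (300 * K + K ^+ 2 - 1)) / ((K ^+ 2 - 1) * K) <= 1200 / s.
  apply: div_le => //; first by apply: mulr_gt0; lra.
  have hms : m * s <= K by nra.
  have h3 : 0 <= 300 * K + K ^+ 2 - 1 by nra.
  have := ler_wpM2r h3 hms.
  nra.
rewrite E2; lra.
Qed.

Theorem lemma5p4 (R : realType) :
  exists C : R, 0 < C /\
  forall (k : nat -> nat) (delta : nat -> nat -> R),
    (forall N, (2 <= k N)%N) ->
    (fun N : nat => (k N)%:R / N%:R : R) @ \oo --> (0 : R) ->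
    (forall N j, (2 <= j <= k N - 1)%N -> 0 <= delta N j <= 1) ->
    exists N0 : nat, forall N : nat, (N0 <= N)%N ->
      forall x : nat, (k N <= x <= 2 * k N)%N ->
        (Sk_exp_hit_gt N (k N) (delta N) (4 * k N) x
           <= (C / Num.sqrt (k N)%:R)%:E)%E.
Proof.
exists 2000; split; first lra.
move=> kf de hk hlim hd.
have h6 : (0 : R) < 6^-1 by rewrite invr_gt0; lra.
have [N1 _ HN1] := cvgr_lt (0 : R) hlim (6^-1) h6.
exists (maxn N1 1) => N hN x hx.
have hN1 : (N1 <= N)%N by lia.
have hlt : (kf N)%:R / N%:R < (6^-1 : R) := HN1 N hN1.
have hNpos : (0 : R) < N%:R by rewrite ltr0n; lia.
have hNk : (5 * kf N < N)%N.
  rewrite ltr_pdivrMr // in hlt.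
  have : ((5 * kf N)%:R : R) < N%:R by rewrite natrM; lra.
  by rewrite ltr_nat.
have k2 := hk N.
have d01 := hd N.
have [hs1 hs2] := PeanoNat.Nat.sqrt_spec (kf N) (le_0_n _).
set M := PeanoNat.Nat.sqrt (kf N) in hs1 hs2.
have hMM : (M * M <= kf N)%N by lia.
have hMM2 : (kf N < M.+1 * M.+1)%N by lia.
have hM1 : (1 <= M)%N by nia.
have hMk : (0 < M <= kf N)%N by apply/andP; split; nia.
have hL := Lam_gt0 R N (kf N) (de N) k2 hNk d01.
rewrite /Sk_exp_hit_gt.
apply: lime_le.
  apply: is_cvg_nneseries => n _ _; rewrite lee_fin divr_ge0 //; last exact: ltW.
  by apply: (surv_ge0 R N (kf N) (de N) k2 hNk d01); rewrite /inr; lia.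
apply: nearW => n.
rewrite sumEFin lee_fin.
apply: le_trans (main_bound R N (kf N) (de N) k2 hNk d01 x M hx hMk n) _.
exact: final_num.
Qed.
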